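(* Let $p\ge 1$, let $\Theta$ be a $p\times p$ correlation matrix (real symmetric positive semi-definite with all diagonal entries equal to $1$), and let $\alpha\in\mathbb{R}^p$ with $\alpha_j\neq 0$ for all $j$. Define the $p\times p$ matrix $g(\Theta,\alpha)$ by $g_{ij}(\Theta,\alpha)=\Theta_{ij}\alpha_i\alpha_j$ for $i\neq j$ and $g_{ii}(\Theta,\alpha)=1$; equivalently $g(\Theta,\alpha)=\Theta\circ\alpha\alpha^{t}+I-D_\alpha^2$, where $\circ$ is the Hadamard (entrywise) product and $D_\alpha$ is the diagonal matrix with diagonal entries $\alpha_1,\dots,\alpha_p$. Let $\lambda_p$ be the minimal eigenvalue of $\Theta$, and let $\alpha_M=\max_j|\alpha_j|$ and $\alpha_m=\min_j|\alpha_j|$. If \[\lambda_p\ \ge\ \frac{\alpha_M^2-1}{\alpha_m^2},\] then $g(\Theta,\alpha)$ is positive semi-definite.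
   Context: The map $g$ is called the multiplicative link function. The hypothesis $\alpha_j\neq 0$ for all $j$ only ensures $\alpha_m>0$, so that the quotient in the condition is defined. *)

(* Defs.v *)
From mathcomp Require Import all_boot all_order all_algebra.
Set Implicit Arguments. Unset Strict Implicit. Unset Printing Implicit Defensive.
Import Order.TTheory GRing.Theory Num.Theory.
Local Open Scope ring_scope.

Definition psd (R : realFieldType) (p : nat) (A : 'M[R]_p) : Prop :=
  A^T = A /\ forall v : 'rV[R]_p, 0 <= (v *m A *m v^T) 0 0.

Definition correlation_matrix (R : realFieldType) (p : nat) (A : 'M[R]_p) : Prop :=
  psd A /\ forall i : 'I_p, A i i = 1.

Definition link_g (R : realFieldType) (p : nat) (Theta : 'M[R]_p) (alpha : 'rV[R]_p)
  : 'M[R]_p :=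
  \matrix_(i, j) (if i == j then 1 else Theta i j * alpha 0 i * alpha 0 j).

Definition alpha_max (R : realFieldType) (p : nat) (alpha : 'rV[R]_p) : R :=
  \big[Num.max/0]_(j < p) `|alpha 0 j|.

(* alpha_m = min_j |alpha_j|  (initial value alpha_M is irrelevant for p >= 1) *)
Definition alpha_min (R : realFieldType) (p : nat) (alpha : 'rV[R]_p) : R :=
  \big[Num.min/alpha_max alpha]_(j < p) `|alpha 0 j|.

(* Main.v *)
Require Import Defs.
From mathcomp Require Import all_boot all_order all_algebra.
Import Order.TTheory GRing.Theory Num.Theory.
Local Open Scope ring_scope.
From mathcomp Require Import complex spectral sesquilinear ring lra.
Import Order.TTheory GRing.Theory Num.Theory.
Local Open Scope sesquilinear_scope.

Lemma map_entry3 (F G : nzRingType) (f : {rmorphism F -> G}) p (a : 'rV[F]_p) (M : 'M[F]_p) (b : 'M[F]_(p,1)) :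
  f ((a *m M *m b) 0 0) = (map_mx f a *m map_mx f M *m map_mx f b) 0 0.
Proof. by rewrite -!map_mxM [RHS]mxE. Qed.

Lemma map_entry2 (F G : nzRingType) (f : {rmorphism F -> G}) p (a : 'rV[F]_p) (b : 'M[F]_(p,1)) :
  f ((a *m b) 0 0) = (map_mx f a *m map_mx f b) 0 0.
Proof. by rewrite -!map_mxM [RHS]mxE. Qed.

Lemma quad_lb (R : rcfType) (p : nat) (T : 'M[R]_p) (c : R) :
  T^T = T -> (forall mu, eigenvalue T mu -> c <= mu) ->
  forall v : 'rV[R]_p, c * (v *m v^T) 0 0 <= (v *m T *m v^T) 0 0.
Proof.
move=> Tsym Hc v.
pose toC := real_complex R.
have conjtoC x : (toC x)^* = toC x.
  by apply: conj_Creal; apply/complex_realP; exists x.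
pose A := map_mx toC T.
have hA : A ^t* = A.
  by apply/matrixP => i j; rewrite /A -[in RHS]Tsym !mxE conjtoC.
have Aherm : A \is hermsymmx by apply/is_hermitianmxP; rewrite expr0 scale1r hA.
have /orthomx_spectralP Aeq := hermitian_normalmx Aherm.
have dreal := hermitian_spectral_diag_real Aherm.
move: Aeq dreal; set P := spectralmx A; set d := spectral_diag A => Aeq dreal.
have Pu : P \is unitarymx := spectral_unitarymx A.
have PPt : P *m P^t* = 1%:M by apply/unitarymxP.
have Punit : P \in unitmx := spectral_unit A.
have iP : invmx P = P^t* by apply: invmx_unitary.
have PtP : P^t* *m P = 1%:M by rewrite -iP mulVmx.
have deig i : c <= complex.Re (d 0 i).
  have dr : d 0 i \is Num.real by move/mxOverP: dreal; apply.
  have : eigenvalue A (d 0 i).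
    apply/eigenvalueP; exists (row i P).
      have -> : row i P *m A = row i (diag_mx d *m P).
        by rewrite -row_mul {1}Aeq !mulmxA mulmxV // mul1mx.
      by apply/rowP => j; rewrite mul_diag_mx !mxE.
    apply/eqP => h.
    have := congr1 (row i) PPt; rewrite row_mul h mul0mx => /rowP /(_ i).
    by rewrite !mxE eqxx /= => /eqP; rewrite eq_sym oner_eq0.
  rewrite eigenvalue_root_char /A -map_char_poly -(RRe_real dr) fmorph_root.
  by rewrite -eigenvalue_root_char; apply: Hc.
pose w := map_mx toC v.
have wt : w ^t* = map_mx toC v^T.
  by apply/matrixP => i j; rewrite !mxE conjtoC.
pose u := w *m P^t*.
have ut : u ^t* = P *m w^t*.
  by rewrite /u trmx_mul map_mxM trmxCK.
have e1 : toC ((v *m T *m v^T) 0 0) = (u *m diag_mx d *m u^t*) 0 0.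
  have -> : u *m diag_mx d *m u^t* = w *m A *m w^t*.
    by rewrite ut /u Aeq iP !mulmxA.
  rewrite wt; exact: (@map_entry3 _ _ (real_complex R) _ v T v^T).
have e2 : toC ((v *m v^T) 0 0) = (u *m u^t*) 0 0.
  by rewrite ut /u mulmxA -[w *m _ *m P]mulmxA PtP mulmx1 wt; exact: (@map_entry2 _ _ (real_complex R) _ v v^T).
have hm : forall a b, toC (a * b) = toC a * toC b := rmorphM (real_complex R).
rewrite -lecR -/toC hm e1 e2 mul_mx_diag -subr_ge0 !mxE.
rewrite mulr_sumr -sumrB; apply: sumr_ge0 => j _.
rewrite !mxE; set x := (\sum_(_ < _) _).
have -> : x * d 0 j * x^* - toC c * (x * x^*) = (d 0 j - toC c) * (x * x^*).
  ring.
apply: mulr_ge0; last exact: mul_conjC_ge0.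
have dr : d 0 j \is Num.real by move/mxOverP: dreal; apply.
rewrite -(RRe_real dr) -(rmorphB (real_complex R)) ler0c subr_ge0.
exact: deig.
Qed.

Lemma dot00 (R : rcfType) p (a b : 'rV[R]_p) :
  (a *m b^T) 0 0 = \sum_i a 0 i * b 0 i.
Proof. by rewrite mxE; apply: eq_bigr => i _; rewrite mxE. Qed.

Lemma add00 (R : rcfType) (A B : 'M[R]_1) : (A + B) 0 0 = A 0 0 + B 0 0.
Proof. by rewrite mxE. Qed.

Theorem mainTheorem1 (R : rcfType) (p : nat) (hp : (0 < p)%N)
  (Theta : 'M[R]_p) (alpha : 'rV[R]_p) (lam : R)
  (hTheta : correlation_matrix Theta)
  (halpha : forall j : 'I_p, alpha 0 j != 0)
  (hlam : eigenvalue Theta lam)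
  (hlam_min : forall mu : R, eigenvalue Theta mu -> lam <= mu)
  (hbound : (alpha_max alpha ^+ 2 - 1) / (alpha_min alpha ^+ 2) <= lam) :
  psd (link_g Theta alpha).
Proof.
move: hTheta => [[Tsym Tpsd] Tdiag].
move: hbound; set aM := alpha_max alpha; set am := alpha_min alpha => hbound.
have leM i : `|alpha 0 i| <= aM.
  by rewrite /aM /alpha_max (bigD1 i) //= le_max lexx.
have gem i : am <= `|alpha 0 i|.
  by rewrite /am /alpha_min (bigD1 i) //= ge_min lexx.
have aMpos : 0 < aM.
  by apply: lt_le_trans (leM (Ordinal hp)); rewrite normr_gt0 halpha.
have ampos : 0 < am.
  by rewrite /am /alpha_min; elim/big_rec: _ => // i x _ hx; rewrite lt_min normr_gt0 halpha hx.
have Tij i j : Theta j i = Theta i j by rewrite -[in RHS]Tsym mxE.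
split.
  apply/matrixP => i j; rewrite !mxE eq_sym; case: eqP => // _.
  by rewrite Tij mulrAC.
move=> v.
pose Da := diag_mx alpha. pose D := diag_mx (\row_i (1 - alpha 0 i ^+ 2)).
have gE : link_g Theta alpha = Da *m Theta *m Da + D.
  apply/matrixP => i j; rewrite mxE [in RHS]mxE mul_mx_diag mxE mul_diag_mx !mxE.
  case: eqP => [->|_]; first by rewrite Tdiag mulr1n; ring.
  by rewrite mulr0n addr0; ring.
rewrite gE mulmxDr mulmxDl !mulmxA add00.
set w := v *m Da.
have wT : w^T = Da *m v^T by rewrite trmx_mul tr_diag_mx.
rewrite -[v *m Da *m Theta *m Da *m v^T](mulmxA _ Da) -wT.
have wi i : w 0 i = v 0 i * alpha 0 i by rewrite /w mul_mx_diag mxE.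
have -> : (v *m D *m v^T) 0 0 = \sum_i v 0 i * (1 - alpha 0 i ^+ 2) * v 0 i.
  by rewrite dot00; apply: eq_bigr => i _; rewrite mul_mx_diag !mxE.
have sq i : alpha 0 i ^+ 2 = `|alpha 0 i| ^+ 2 by rewrite real_normK // num_real.
have [le1|gt1] := lerP (aM ^+ 2) 1.
  apply: addr_ge0; first exact: Tpsd.
  apply: sumr_ge0 => i _.
  have h1 := leM i; have h2 : 0 <= `|alpha 0 i| := normr_ge0 _.
  have h3 : alpha 0 i ^+ 2 <= 1.
    rewrite sq; apply: le_trans le1; rewrite lerXn2r // ?nnegrE //; exact: ltW.
  have -> : v 0 i * (1 - alpha 0 i ^+ 2) * v 0 i = (1 - alpha 0 i ^+ 2) * v 0 i ^+ 2 by ring.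
  by apply: mulr_ge0; [rewrite subr_ge0 | exact: sqr_ge0].
set c := (aM ^+ 2 - 1) / am ^+ 2 in hbound.
have hq := @quad_lb _ _ Theta c Tsym (fun mu h => le_trans hbound (hlam_min mu h)) w.
apply: le_trans (lerD hq (lexx _)).
rewrite dot00 mulr_sumr -big_split /=; apply: sumr_ge0 => i _.
have cam : c * am ^+ 2 = aM ^+ 2 - 1 by rewrite /c mulfVK // expf_neq0 // gt_eqF.
have cpos : 0 <= c.
  rewrite /c divr_ge0 //; last exact: sqr_ge0.
  by rewrite subr_ge0 ltW.
have h1 : am ^+ 2 <= alpha 0 i ^+ 2 by rewrite sq lerXn2r // ?nnegrE // ltW.
have h2 : alpha 0 i ^+ 2 <= aM ^+ 2 by rewrite sq lerXn2r // ?nnegrE // ltW.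
have h3 : aM ^+ 2 - 1 <= c * alpha 0 i ^+ 2 by rewrite -cam ler_wpM2l.
have -> : c * (w 0 i * w 0 i) + v 0 i * (1 - alpha 0 i ^+ 2) * v 0 i
   = (c * alpha 0 i ^+ 2 + 1 - alpha 0 i ^+ 2) * v 0 i ^+ 2 by rewrite wi; ring.
apply: mulr_ge0; last exact: sqr_ge0.
lra.
Qed.
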